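(* Let $K$ be a field of characteristic $0$, let $a\in K^*$ and let $P_t(x)\in K[t,x]$ be a polynomial of degree $4$ in $x$ and of even degree $d$ in $t$, with associated Châtelet surface bundle $f:V\to\mathbb{P}^1$ and degeneracy locus $\mathrm{De}(V)\subset\mathbb{P}^1\times\mathbb{P}^1$. For each closed point $\theta\in\mathbb{P}^1$, the fibre $V_\theta$ is smooth over the residue field $K(\theta)$ if and only if $\theta$ does not lie in the branch locus $\mathfrak{B}\subset\mathbb{P}^1$ of the first projection $\mathrm{pr}_1:\mathrm{De}(V)\to\mathbb{P}^1$. This is also equivalent to the condition that $P_\theta(x)\in K(\theta)[x]$ and $P_\theta^*(x')=x'^4P_\theta(1/x')\in K(\theta)[x']$ are both separable polynomials.
   Context: Let $\tilde P_{t,t'}(x,x')=x'^4t'^dP_{t/t'}(x/x')$ be the bihomogenisation of $P_t(x)$. $V$ is the projective variety obtained by gluing the hypersurfaces $Y^2-aZ^2=W_{\infty\infty}^2\tilde P_{t,1}(x,1)$, $Y^2-aZ^2=W_{\infty0}^2\tilde P_{t,1}(1,x')$, $Y^2-aZ^2=W_{0\infty}^2\tilde P_{1,t'}(x,1)$, $Y^2-aZ^2=W_{00}^2\tilde P_{1,t'}(1,x')$ over the four standard affine opens of $\mathbb{P}^1\times\mathbb{P}^1$ (coordinates $t,t'=1/t$ and $x,x'=1/x$), times $\mathbb{P}^2$, via $W_{\infty\infty}=W_{\infty0}x'^2=W_{0\infty}t'^{d/2}=W_{00}x'^2t'^{d/2}$, $W_{\infty0}=W_{0\infty}x^2t'^{d/2}=W_{00}t'^{d/2}$,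 $W_{0\infty}=W_{00}x'^2$; $f$ is the composite of the projection to $\mathbb{P}^1\times\mathbb{P}^1$ with the first projection. For $\theta\neq\infty$, $P_\theta(x)$ denotes the specialization of $P_t(x)$ at $t=\theta$ and $V_\theta$ is the fibre $y^2-az^2=P_\theta(x)$; for $\theta=\infty$, $P_\infty(x)$ is obtained by setting $t'=0$ in $t'^dP_{1/t'}(x)$. $\mathrm{De}(V)$ is the curve $\tilde P_{t,t'}(x,x')=0$. *)

(* Defs.v *)
From HB Require Import structures.
From mathcomp Require Import all_boot all_order all_algebra all_field.
From mathcomp Require Import mpoly.

Set Implicit Arguments.
Unset Strict Implicit.
Unset Printing Implicit Defensive.

Import GRing.Theory.
Local Open Scope ring_scope.

(* P_t(x) in K[t,x] is represented as a polynomial in x whose coefficients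
   are polynomials in t:  P = \sum_i c_i(t) x^i,  P : {poly {poly K}}. *)

Definition tdeg (K : fieldType) (P : {poly {poly K}}) : nat :=
  (\max_(i < size P) (size (nth 0%R P i)).-1)%N.

(* P_theta(x) in K(theta)[x], for a finite closed point theta, where
   K(theta) = L is generated over K by theta. *)
Definition Pspec (K : fieldType) (L : fieldExtType K) (theta : L)
    (P : {poly {poly K}}) : {poly L} :=
  map_poly (fun c : {poly K} => (map_poly (in_alg L) c).[theta]) P.

(* P_infty(x): set t' = 0 in t'^d P_{1/t'}(x), i.e. take the coefficient
   of t^d of every x-coefficient of P. *)
Definition Pinf (K : fieldType) (P : {poly {poly K}}) : {poly K} :=
  map_poly (fun c : {poly K} => c`_(tdeg P)) P.

(* p^*(x') = x'^4 p(1/x')  (for p of degree <= 4) *)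
Definition recip4 (F : fieldType) (p : {poly F}) : {poly F} :=
  \poly_(i < 5) p`_(4 - i).

Definition vx : 'I_4 := @inord 3 0.
Definition vY : 'I_4 := @inord 3 1.
Definition vZ : 'I_4 := @inord 3 2.
Definition vW : 'I_4 := @inord 3 3.

(* the equation Y^2 - a Z^2 - W^2 p(x) of a chart of the Chatelet surface
   Y^2 - a Z^2 = W^2 p(x) in A^1 x P^2 *)
Definition chatelet_eq (M : fieldType) (a : M) (p : {poly M}) : {mpoly M[4]} :=
  'X_vY ^+ 2 - a *: 'X_vZ ^+ 2
  - 'X_vW ^+ 2 * (\sum_(i < size p) p`_i *: 'X_vx ^+ i).

(* v = (x, Y, Z, W) with (Y:Z:W) in P^2 is a singular point of the surface
   (Jacobian criterion). *)
Definition singular_point (M : fieldType) (a : M) (p : {poly M})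
    (v : 'I_4 -> M) : Prop :=
  let G := chatelet_eq a p in
  [/\ (v vY, v vZ, v vW) != (0, 0, 0),
      G.@[v] = 0 &
      forall i : 'I_4, (G^`M(i)).@[v] = 0].

(* The fibre V_theta over the residue field F = K(theta), glued from the
   charts  Y^2 - aZ^2 = W^2 p(x)  and  Y^2 - aZ^2 = W'^2 p^*(x'),
   is smooth over F: it has no singular point over any field extension M
   of F (i.e. it is geometrically regular). *)
Definition smooth_fibre (F : fieldType) (a : F) (p : {poly F}) : Prop :=
  forall (M : fieldType) (iota : {rmorphism F -> M}) (v : 'I_4 -> M),
    ~ singular_point (iota a) (map_poly iota p) v /\
    ~ singular_point (iota a) (map_poly iota (recip4 p)) v.

(* theta lies in the branch locus of pr_1 : De(V) -> P^1: the fibre of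
   De(V) over theta (given in the two charts by p(x) = 0 and p^*(x') = 0,
   where p = P_theta) has a geometric point at which pr_1 is ramified,
   i.e. at which the derivative of the local equation in the fibre
   coordinate vanishes. *)
Definition in_branch_locus (F : fieldType) (p : {poly F}) : Prop :=
  exists (M : fieldType) (iota : {rmorphism F -> M}) (x0 : M),
    (root (map_poly iota p) x0 /\ root (map_poly iota p)^`() x0) \/
    (root (map_poly iota (recip4 p)) x0 /\
     root (map_poly iota (recip4 p))^`() x0).

(* Main.v *)
Require Import Defs.
From HB Require Import structures.
From mathcomp Require Import all_boot all_order all_algebra all_field.
From mathcomp Require Import mpoly.
Import GRing.Theory.
Local Open Scope ring_scope.
From Stdlib Require Import Classical.
Lemma irr_factor (F : fieldType) (r : {poly F}) : (1 < size r)%N ->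
  exists s : {poly F}, irreducible_poly s /\ s %| r.
Proof.
move Hn: (size r) => n; elim: n {-2}n (leqnn n) r Hn => [|n IH] m Hm r Hr Hs.
  by move: Hm; rewrite leqn0 => /eqP Hm; rewrite Hm in Hs.
have [irr|nirr] := classic (irreducible_poly r).
  by exists r; split; [exact: irr|exact: dvdpp].
have : ~ (forall q : {poly F}, size q != 1%N -> q %| r -> q %= r).
  by move=> H; apply: nirr; split; [rewrite Hr|].
move=> /not_all_ex_not [q Hq'].
have [Hq1 [Hqr Hqe]] : size q != 1%N /\ q %| r /\ ~~ (q %= r).
  have [h1|h1] := boolP (size q != 1%N); last by exfalso; apply: Hq' => H; rewrite H in h1.
  have [h2|h2] := boolP (q %| r); last by exfalso; apply: Hq' => _ H; rewrite H in h2.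
  have [h3|h3] := boolP (q %= r); last by [].
  by exfalso; apply: Hq'.
have r0 : r != 0 by rewrite -size_poly_gt0 Hr (ltn_trans _ Hs).
have q0 : q != 0 by apply: contra_neq r0 => q0; move: Hqr; rewrite q0 dvd0p => /eqP.
have Hlt : (size q < m)%N.
  by rewrite -Hr ltn_neqAle dvdp_leq // andbT dvdp_size_eqp.
have Hq : (1 < size q)%N.
  by rewrite ltn_neqAle eq_sym Hq1 /= size_poly_gt0.
have [s [Hs1 Hs2]] := IH (size q) (leq_trans Hlt Hm) q erefl Hq.
by exists s; split => //; exact: dvdp_trans Hs2 Hqr.
Qed.

Lemma ext_root (F : fieldType) (r : {poly F}) : (1 < size r)%N ->
  exists (M : fieldType) (iota : {rmorphism F -> M}) (x0 : M),
    root (map_poly iota r) x0.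
Proof.
move=> /irr_factor [s [Hs Hsr]].
have [L _ [z Hz _]] := irredp_FAdjoin Hs.
exists L, (GRing.in_alg L), z.
by apply: root_dvdp Hz; rewrite dvdp_map.
Qed.

Definition nocommon {F : fieldType} (q : {poly F}) :=
  forall (M : fieldType) (iota : {rmorphism F -> M}) (x0 : M),
    ~ (root (map_poly iota q) x0 /\ root (map_poly iota q)^`() x0).

Lemma sep_nocommon (F : fieldType) (q : {poly F}) :
  separable_poly q <-> nocommon q.
Proof.
split.
  move=> Hsep M iota x0 [r1 r2].
  have := Hsep; rewrite unlock -(coprimep_map iota) -deriv_map => Hc.
  by move: (coprimep_root Hc r1); rewrite (eqP r2) eqxx.
move=> Hn; apply/negPn/negP => Hc.
move: Hc; rewrite unlock /coprimep.
have [g0|gn0] := eqVneq (gcdp q q^`()) 0.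
  move: (g0); move/eqP; rewrite gcdp_eq0 => /andP [/eqP q0 _] _.
  have [M [iota [x0 _]]] := @ext_root F 'X (ltac:(by rewrite size_polyX)).
  by apply: (Hn M iota x0); rewrite q0 map_poly0 deriv0 !root0.
move=> H1.
have Hg : (1 < size (gcdp q q^`()))%N.
  by rewrite ltn_neqAle eq_sym H1 /= size_poly_gt0.
have [M [iota [x0 Hx]]] := @ext_root F _ Hg.
apply: (Hn M iota x0); split.
  by apply: root_dvdp Hx; rewrite dvdp_map dvdp_gcdl.
by rewrite deriv_map; apply: root_dvdp Hx; rewrite dvdp_map dvdp_gcdr.
Qed.
Lemma mderivXU (M : fieldType) (i j : 'I_4) :
  mderiv j ('X_i : {mpoly M[4]}) = (i == j)%:R.
Proof.
rewrite mderivX mnm1E.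
case: eqP => [->|_]; last by rewrite scale0r.
have -> : (U_(j) - U_(j))%MM = 0%MM :> 'X_{1..4} by apply/mnmP => k; rewrite mnmBE subnn mnm0E.
by rewrite mpolyX0 scale1r.
Qed.

Lemma mderivXUn (M : fieldType) (i j : 'I_4) k :
  mderiv j (('X_i : {mpoly M[4]}) ^+ k) = (i == j)%:R * ('X_i ^+ k.-1 *+ k).
Proof.
elim: k => [|k IH]; first by rewrite expr0 mderivC mulr0n mulr0.
rewrite exprSr mderivM IH mderivXU /=.
case: (i == j); last by rewrite !mul0r mulr0 addr0.
rewrite !mul1r mulr1 mulrnAl -exprSr.
case: k {IH} => [|k] /=; first by rewrite mulr0n add0r expr0.
by rewrite [in RHS]mulrSr.
Qed.

Definition Sx {M : fieldType} (q : {poly M}) : {mpoly M[4]} :=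
  \sum_(i < size q) q`_i *: 'X_vx ^+ i.

Lemma evalS (M : fieldType) (q : {poly M}) v : (Sx q).@[v] = q.[v vx].
Proof.
rewrite /Sx raddf_sum horner_coef; apply: eq_bigr => i _.
by rewrite /= mevalZ rmorphXn /= mevalXU.
Qed.

Lemma dS0 (M : fieldType) (q : {poly M}) j : vx != j -> mderiv j (Sx q) = 0.
Proof.
move=> hj; rewrite /Sx raddf_sum big1 // => i _.
by rewrite /= mderivZ mderivXUn (negbTE hj) mul0r scaler0.
Qed.

Lemma evaldS (M : fieldType) (q : {poly M}) v :
  (mderiv vx (Sx q)).@[v] = q^`().[v vx].
Proof.
have [->|q0] := eqVneq q 0.
  by rewrite /Sx size_poly0 big_ord0 raddf0 meval0 deriv0 horner0.
have hs : (size q^`() <= (size q).-1)%N.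
  by rewrite -ltnS prednK ?lt_size_deriv // size_poly_gt0.
rewrite /Sx (raddf_sum (mderiv vx)) raddf_sum (horner_coef_wide _ hs).
case: (size q) => [|n]; first by rewrite !big_ord0.
rewrite big_ord_recl /= mderivZ mderivXUn mulr0n mulr0 scaler0 meval0 add0r.
apply: eq_bigr => i _.
rewrite /= mderivZ mderivXUn eqxx mul1r mevalZ mevalMn rmorphXn /= mevalXU.
by rewrite coef_deriv /bump /= mulrnAr mulrnAl.
Qed.

Lemma vne : ((vx == vY) = false) * ((vx == vZ) = false) * ((vx == vW) = false) *
  ((vY == vx) = false) * ((vY == vZ) = false) * ((vY == vW) = false) *
  ((vZ == vx) = false) * ((vZ == vY) = false) * ((vZ == vW) = false) *
  ((vW == vx) = false) * ((vW == vY) = false) * ((vW == vZ) = false).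
Proof. by rewrite /vx /vY /vZ /vW -!(inj_eq val_inj) /= !inordK. Qed.

Lemma evG (M : fieldType) (b : M) (q : {poly M}) v :
  (chatelet_eq b q).@[v] = v vY ^+ 2 - b * v vZ ^+ 2 - v vW ^+ 2 * q.[v vx].
Proof.
by rewrite /chatelet_eq -/(Sx q) !mevalB mevalZ !rmorphM /= evalS !mevalXU -!expr2.
Qed.

Lemma evdG (M : fieldType) (b : M) (q : {poly M}) v j :
  ((chatelet_eq b q)^`M(j)).@[v] = (vY==j)%:R * (v vY *+ 2) - b * ((vZ==j)%:R * (v vZ *+ 2))
     - ((vW==j)%:R * (v vW *+ 2) * q.[v vx] + v vW ^+ 2 * (mderiv j (Sx q)).@[v]).
Proof.
rewrite /chatelet_eq -/(Sx q) !mderivB mderivZ mderivM !mderivXUn /= !expr1.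
by rewrite !mevalB mevalZ mevalD !rmorphM /= evalS !mevalMn !mevalXU meval1 -expr2.
Qed.

Lemma sing_iff (M : fieldType) (b : M) (q : {poly M}) : b != 0 -> (2%:R : M) != 0 ->
  (exists v, singular_point b q v) <-> exists x0, root q x0 /\ root q^`() x0.
Proof.
move=> b0 two0; split.
  move=> [v [Hn HG Hd]].
  have dY := Hd vY; have dZ := Hd vZ; have dW := Hd vW; have dx := Hd vx.
  rewrite evdG eqxx !vne dS0 ?vne // meval0 in dY.
  rewrite evdG eqxx !vne dS0 ?vne // meval0 in dZ.
  rewrite evdG eqxx !vne dS0 ?vne // meval0 in dW.
  rewrite evdG !vne evaldS in dx.
  rewrite ?(mul0r, mul1r, mulr0, add0r, addr0, subr0, sub0r, oppr0) in dY dZ dW dx.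
  have eY : v vY = 0 by move: dY => /eqP; rewrite -mulr_natr mulf_eq0 (negbTE two0) orbF => /eqP.
  have eZ : v vZ = 0.
    by move: dZ => /eqP; rewrite oppr_eq0 -mulr_natr !mulf_eq0 (negbTE two0) (negbTE b0) orbF /= => /eqP.
  have eW : v vW != 0 by apply: contra_neq Hn => ->; rewrite eY eZ.
  exists (v vx); split; rewrite /root.
    by move: dW => /eqP; rewrite oppr_eq0 -mulr_natr !mulf_eq0 (negbTE two0) (negbTE eW).
  by move: dx => /eqP; rewrite oppr_eq0 !mulf_eq0 (negbTE eW).
move=> [x0 [r1 r2]].
exists (fun i => if i == vx then x0 else if i == vW then 1 else 0).
split.
- by rewrite /= !vne eqxx; apply/eqP; case => /eqP; rewrite oner_eq0.
- by rewrite evG /= !vne !eqxx (eqP r1) !expr2 ?mul0r ?mulr0 ?subr0.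
move=> j; rewrite evdG /= !vne !eqxx (eqP r1).
have [<-|hj] := eqVneq vx j.
  by rewrite evaldS /= !eqxx (eqP r2) !vne !mul0rn !mulr0 !addr0 !subr0.
by rewrite dS0 // meval0 !mul0rn !mulr0 !addr0 !subr0.
Qed.

Lemma smooth_iff (F : fieldType) (a : F) (p : {poly F}) : a != 0 -> (2%:R : F) != 0 ->
  (smooth_fibre a p <-> ~ in_branch_locus p).
Proof.
move=> a0 two0.
have H : forall (M : fieldType) (iota : {rmorphism F -> M}) (q : {poly F}),
    (exists v, singular_point (iota a) (map_poly iota q) v) <->
    exists x0, root (map_poly iota q) x0 /\ root (map_poly iota q)^`() x0.
  move=> M iota q; apply: sing_iff; first by rewrite fmorph_eq0.
  by rewrite -(rmorph_nat iota) fmorph_eq0.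
split.
  move=> Hs [M [iota [x0 [[r1 r2]|[r1 r2]]]]].
    have [v Hv] := (proj2 (H M iota p)) (ex_intro _ x0 (conj r1 r2)).
    by case: (Hs M iota v) => /(_ Hv).
  have [v Hv] := (proj2 (H M iota (recip4 p))) (ex_intro _ x0 (conj r1 r2)).
  by case: (Hs M iota v) => _ /(_ Hv).
move=> Hb M iota v; split => Hsing; apply: Hb.
  have [x0 [r1 r2]] := (proj1 (H M iota p)) (ex_intro _ v Hsing).
  by exists M, iota, x0; left.
have [x0 [r1 r2]] := (proj1 (H M iota (recip4 p))) (ex_intro _ v Hsing).
by exists M, iota, x0; right.
Qed.

Lemma branch_sep (F : fieldType) (p : {poly F}) :
  ~ in_branch_locus p <-> separable_poly p /\ separable_poly (recip4 p).
Proof.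
rewrite !sep_nocommon; split.
  move=> Hb; split => M iota x0 [r1 r2]; apply: Hb; exists M, iota, x0; [left|right]; done.
move=> [H1 H2] [M [iota [x0 [[r1 r2]|[r1 r2]]]]]; [exact: (H1 M iota x0)|exact: (H2 M iota x0)].
Qed.

Theorem lemma2p3 (K : fieldType) (charK0 : [pchar K] =i pred0)
    (a : K) (a_neq0 : a != 0) (P : {poly {poly K}})
    (degx4 : size P = 5%N) (deg_t_even : ~~ odd (tdeg P)) :
  (* finite closed points theta, with residue field L = K(theta) *)
  (forall (L : fieldExtType K) (theta : L), <<1%VS; theta>>%VS = fullv ->
     (smooth_fibre (in_alg L a) (Pspec theta P) <->
        ~ in_branch_locus (Pspec theta P)) /\
     (~ in_branch_locus (Pspec theta P) <->
        separable_poly (Pspec theta P) /\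
        separable_poly (recip4 (Pspec theta P)))) /\
  (* the point theta = infinity, with residue field K *)
  ((smooth_fibre a (Pinf P) <-> ~ in_branch_locus (Pinf P)) /\
   (~ in_branch_locus (Pinf P) <->
      separable_poly (Pinf P) /\ separable_poly (recip4 (Pinf P)))).
Proof.
have two0 : (2%:R : K) != 0.
  have := charK0 2; by rewrite !inE /= => /negbT.
split; last by split; [exact: smooth_iff|exact: branch_sep].
move=> L theta _; split; last exact: branch_sep.
apply: smooth_iff; first by rewrite fmorph_eq0.
by rewrite -(rmorph_nat (GRing.in_alg L)) fmorph_eq0.
Qed.
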